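(* For every binary cellular automaton $C=(\{0,1\},\delta)$ with blank symbol $1$ there exist an integer $N$ and a $(2N+2)$-dimensional subtraction game $\mathcal{D}_C$ (finite difference set in $\mathbb{Z}^{2N+2}$ with all vectors of positive coordinate sum) such that $c(t,u)=p(Nt+u,\,Nt-u,\,0,0,\dots,0,1)$ for all integers $t\ge0$ and $u$ with $|u|\le Nt$, where $c(t,u)$ is the content of cell $u$ at time $t$ of $C$ started from the configuration with $c(0,u)=0$ iff $u=0$, and $p(\cdot)$ is the value of a position of $\mathcal{D}_C$.
   Context: Binary cellular automaton with neighborhood size $r$: configurations $c:\mathbb{Z}\to\{0,1\}$, one step maps $c$ to $c'$ with $c'(u)=\delta(c(u-r),\dots,c(u+r))$ for $\delta:\{0,1\}^{2r+1}\to\{0,1\}$; blank symbol $1$ means $\delta(1,\dots,1)=1$. Subtraction game with finite difference set $D\subset\mathbb{Z}^d$: positions $x\in\mathbb{Z}_{\ge0}^d$, move from $x$ to $y\in\mathbb{Z}_{\ge0}^d$ iff $x-y\in D$; normal play. The value of a position is $0$ for a P-position (player to move has no winning strategy) and $1$ for an N-position. *)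

(* Defs.v *)
From HB Require Import structures.
From mathcomp Require Import all_boot all_order all_algebra.
Set Implicit Arguments. Unset Strict Implicit. Unset Printing Implicit Defensive.
Import Order.TTheory GRing.Theory Num.Theory.
Local Open Scope ring_scope.

(** Binary cellular automata. Symbol 0 is [false], symbol 1 is [true].
    A local rule of neighborhood size r is a map from the window
    (c(u-r), ..., c(u+r)), indexed by 'I_(2r+1), to a symbol. *)
Definition config := int -> bool.

Definition ca_step (r : nat) (delta : {ffun 'I_(2 * r + 1) -> bool} -> bool)
  (c : config) : config :=
  fun u => delta [ffun j : 'I_(2 * r + 1) => c (u - r%:Z + (nat_of_ord j)%:Z)].

Definition blank_one (r : nat) (delta : {ffun 'I_(2 * r + 1) -> bool} -> bool) : Prop :=
  delta [ffun => true] = true.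

Definition init_config : config := fun u => u != 0.

Definition ca_run (r : nat) (delta : {ffun 'I_(2 * r + 1) -> bool} -> bool)
  (t : nat) (u : int) : bool := iter t (ca_step delta) init_config u.

Definition vec (d : nat) := {ffun 'I_d -> int}.

Definition nonneg (d : nat) (x : vec d) : Prop := forall i, 0 <= x i.

Definition game_move (d : nat) (D : seq (vec d)) (x y : vec d) : Prop :=
  nonneg y /\ [ffun i => x i - y i] \in D.

(** N-positions (player to move has a winning strategy), defined inductively:
    x is an N-position iff there is a move to some y from which every move
    leads to an N-position (i.e. y is a P-position). *)
Inductive N_position (d : nat) (D : seq (vec d)) : vec d -> Prop :=
| NPos x y : game_move D x y ->
    (forall z, game_move D y z -> N_position D z) -> N_position D x.

(** Value of a position: 1 (true) for an N-position, 0 (false) for a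
    P-position (no winning strategy). Stated as a boolean specification. *)
Definition game_value_is (d : nat) (D : seq (vec d)) (x : vec d) (b : bool) : Prop :=
  b = true <-> N_position D x.

Definition positive_sums (d : nat) (D : seq (vec d)) : Prop :=
  forall v, v \in D -> 0 < \sum_(i < d) v i.

Definition ca_position (N t : nat) (u : int) : vec (2 * N + 2) :=
  [ffun i : 'I_(2 * N + 2) =>
     if nat_of_ord i == 0%N then (N * t)%:Z + u
     else if nat_of_ord i == 1%N then (N * t)%:Z - u
     else if nat_of_ord i == (2 * N + 1)%N then 1
     else 0].

(* Main.v *)
Require Import Defs.
From HB Require Import structures.
From mathcomp Require Import all_boot all_order all_algebra.
From mathcomp Require Import zify.
From Stdlib Require Import Classical.
Set Implicit Arguments. Unset Strict Implicit.
Import Order.TTheory GRing.Theory Num.Theory.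
Local Open Scope ring_scope.

Section Game.
Variable d : nat.

Definition sm (x : vec d) : int := \sum_(i < d) x i.

Lemma move_sm (D : seq (vec d)) x y : positive_sums D -> game_move D x y -> sm y < sm x.
Proof.
move=> HD [_ Hv]; have := HD _ Hv.
have -> : \sum_(i < d) [ffun i => x i - y i] i = sm x - sm y.
  by rewrite /sm -sumrB; apply: eq_bigr => i _; rewrite ffunE.
by rewrite subr_gt0.
Qed.

Lemma sm_ge0 x : nonneg x -> 0 <= sm x.
Proof. by move=> Hx; apply: sumr_ge0 => i _; apply: Hx. Qed.

Lemma game_ind (D : seq (vec d)) (P : vec d -> Prop) : positive_sums D ->
  (forall x, nonneg x -> (forall y, game_move D x y -> P y) -> P x) ->
  forall x, nonneg x -> P x.
Proof.
move=> HD H.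
suff Hn: forall n : nat, forall x, nonneg x -> sm x < n%:Z -> P x.
  move=> x Hx; apply: (Hn (absz (sm x)).+1 x Hx); lia.
elim=> [|n IH] x Hx Hlt.
  by have := sm_ge0 Hx; lia.
apply: H => // y Hy; apply: IH; first by case: Hy.
have := move_sm HD Hy; lia.
Qed.

Lemma N_not_P (D : seq (vec d)) x : positive_sums D -> nonneg x ->
  ~ (N_position D x /\ forall z, game_move D x z -> N_position D z).
Proof.
move=> HD; move: x; apply: (game_ind HD) => x Hx IH [Hn HP].
destruct Hn as [x y Hxy Hy].
by apply: (IH y Hxy); split; [apply: HP | apply: Hy].
Qed.

Lemma N_or_P (D : seq (vec d)) x : positive_sums D -> nonneg x ->
  N_position D x \/ (forall z, game_move D x z -> N_position D z).
Proof.
move=> HD; move: x; apply: (game_ind HD) => x Hx IH.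
case: (classic (exists z, game_move D x z /\ ~ N_position D z)) => [[z [Hz HnN]]|Hno].
  left; apply: (NPos Hz); by case: (IH z Hz).
right=> z Hz; apply: NNPP => HnN; apply: Hno; by exists z.
Qed.

Lemma N_char (D : seq (vec d)) x : positive_sums D -> nonneg x ->
  (N_position D x <-> exists y, game_move D x y /\ ~ N_position D y).
Proof.
move=> HD Hx; split.
  case=> x0 y Hxy Hy; exists y; split => // Hny.
  have Hyn : nonneg y by case: Hxy.
  exact: (N_not_P HD Hyn).
case=> y [Hxy Hny]; apply: (NPos Hxy).
have Hyn : nonneg y by case: Hxy.
by case: (N_or_P HD Hyn).
Qed.

Definition pos (a b : int) (s : nat) : vec d :=
  [ffun i : 'I_d => if nat_of_ord i == 0%N then a else if nat_of_ord i == 1%N then b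
     else if nat_of_ord i == s then 1 else 0].

Definition mkv (q : int * int * nat * nat) : vec d :=
  [ffun i : 'I_d => if nat_of_ord i == 0%N then q.1.1.1 else if nat_of_ord i == 1%N then q.1.1.2
     else if nat_of_ord i == q.1.2 then 1 else if nat_of_ord i == q.2 then -1 else 0].

Definition validq (q : int * int * nat * nat) : Prop :=
  [/\ (2 <= q.1.2)%N, (2 <= q.2)%N, q.1.2 <> q.2, (q.1.2 < d)%N & (q.2 < d)%N].

Lemma sum_ind (c : nat) (x : int) : (c < d)%N ->
  \sum_(i < d) (if nat_of_ord i == c then x else 0) = x.
Proof.
move=> Hc; rewrite (bigD1 (Ordinal Hc)) //= eqxx big1 ?addr0 // => i Hi.
case: eqP => // Hic; case/eqP: Hi; exact: val_inj.
Qed.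

Lemma sum_mkv q : validq q -> \sum_(i < d) mkv q i = q.1.1.1 + q.1.1.2.
Proof.
case: q => [[[da db] s] t] [/= H1 H2 H3 H4 H5].
have Hd0 : (0 < d)%N by lia.
have Hd1 : (1 < d)%N by lia.
transitivity (\sum_(i < d) ((if nat_of_ord i == 0%N then da else 0)
   + (if nat_of_ord i == 1%N then db else 0) + (if nat_of_ord i == s then 1 else 0)
   + (if nat_of_ord i == t then -1 else 0))).
  apply: eq_bigr => i _; rewrite ffunE /=.
  by do ! case: eqP => //= *; lia.
rewrite !big_split /= !sum_ind //; lia.
Qed.

Lemma pos_sums L : (forall q, q \in L -> validq q) ->
  (forall q, q \in L -> 0 < q.1.1.1 + q.1.1.2) -> positive_sums (map mkv L).
Proof.
move=> HV HP v /mapP [q Hq ->]; rewrite sum_mkv; [exact: HP | exact: HV].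
Qed.

Lemma move_pos L a b s y : (forall q, q \in L -> validq q) -> (2 <= s)%N ->
  game_move (map mkv L) (pos a b s) y <->
  exists q, [/\ q \in L, q.1.2 = s, 0 <= a - q.1.1.1, 0 <= b - q.1.1.2
              & y = pos (a - q.1.1.1) (b - q.1.1.2) q.2].
Proof.
move=> HV Hs; split.
  case=> Hy /mapP [q Hq Eq]; exists q.
  have Ey : forall i, y i = pos a b s i - mkv q i.
    move=> i; have := Eq; move/ffunP/(_ i); rewrite ffunE => <-; lia.
  have := HV q Hq; case: q Hq Eq Ey => [[[da db] s'] t] /= Hq Eq Ey [H1 H2 H3 H4 H5]; rewrite /= in H1 H2 H3 H4 H5.
  have Hd0 : (0 < d)%N by lia.
  have Hd1 : (1 < d)%N by lia.
  have := Hy (Ordinal H4); rewrite Ey !ffunE /=.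
  have -> : (s' == 0%N) = false by apply/eqP; lia.
  have -> : (s' == 1%N) = false by apply/eqP; lia.
  rewrite eqxx; case: eqP => [Ess|Hne] Hge; last by lia.
  have := Hy (Ordinal Hd0); rewrite Ey !ffunE /= => Ha.
  have := Hy (Ordinal Hd1); rewrite Ey !ffunE /= => Hb.
  split => //; try lia.
  apply/ffunP => i; rewrite Ey !ffunE.
  by do ! case: eqP => //= *; lia.
case=> q [Hq Hs' Ha Hb ->]; split.
  by move=> i; rewrite ffunE; do ! case: eqP => //= *; lia.
apply/mapP; exists q => //; apply/ffunP => i.
have := HV q Hq; case: q Hq Hs' Ha Hb => [[[da db] s'] t] /= Hq Hs' Ha Hb [H1 H2 H3 H4 H5]; rewrite /= in H1 H2 H3 H4 H5 Hs' Ha Hb *.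
by rewrite !ffunE; do ! case: eqP => //= *; lia.
Qed.

Lemma G_char L a b s : (forall q, q \in L -> validq q) ->
  (forall q, q \in L -> 0 < q.1.1.1 + q.1.1.2) -> (2 <= s)%N -> 0 <= a -> 0 <= b ->
  (N_position (map mkv L) (pos a b s) <->
   exists q, [/\ q \in L, q.1.2 = s, 0 <= a - q.1.1.1, 0 <= b - q.1.1.2
              & ~ N_position (map mkv L) (pos (a - q.1.1.1) (b - q.1.1.2) q.2)]).
Proof.
move=> HV HP Hs Ha Hb.
have Hx : nonneg (pos a b s) by move=> i; rewrite ffunE; do ! case: eqP => //.
rewrite (N_char (pos_sums HV HP) Hx); split.
  case=> y [/(move_pos _ _ _ HV Hs) [q [Hq E1 E2 E3 ->]] Hn]; by exists q.
case=> q [Hq E1 E2 E3 Hn]; exists (pos (a - q.1.1.1) (b - q.1.1.2) q.2); split => //.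
by apply/(move_pos _ _ _ HV Hs); exists q.
Qed.

End Game.
Section CA.
Variable r : nat.
Variable delta : {ffun 'I_(2 * r + 1) -> bool} -> bool.
Hypothesis Hblank : blank_one delta.

Local Notation n := (2 * r + 1)%N.
Local Notation T := {ffun 'I_(2 * r + 1) -> bool}.
Local Notation K := #|T|.
Local Notation N := (K + 2 * r + 2)%N.
Local Notation dd := (2 * N + 2)%N.
Local Notation last := (2 * N + 1)%N.

Definition ea (X : bool) : int := if X then 1 else 0.
Definition eb (X : bool) : int := if X then 0 else 1.
Definition kk (j : 'I_n) : int := j%:Z - r%:Z.
Definition qt (X : bool) (w : T) : nat := (2 + (if X then K else 0) + enum_rank w)%N.
Definition rt (X : bool) (j : 'I_n) : nat := (2 + 2 * K + (if X then n else 0) + j)%N.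

Definition LM : seq (int * int * nat * nat) :=
  [seq (ea X, eb X, last, qt X w) | X <- [:: true; false], w <- [seq w <- enum T | delta w]].
Definition qq X (wj : T * 'I_n) : int * int * nat * nat :=
  if wj.1 wj.2 then (N%:Z - kk wj.2 - ea X, N%:Z + kk wj.2 - eb X, qt X wj.1, last)
  else (ea X, eb X, qt X wj.1, rt X wj.2).
Definition LQ : seq (int * int * nat * nat) :=
  [seq qq X wj | X <- [:: true; false], wj <- [seq (w, j) | w <- enum T, j <- enum 'I_n]].
Definition LR : seq (int * int * nat * nat) :=
  [seq (N%:Z - kk j - 2 * ea X, N%:Z + kk j - 2 * eb X, rt X j, last) | X <- [:: true; false], j <- enum 'I_n].
Definition L := LM ++ LQ ++ LR.
Definition DD := map (mkv dd) L.
Definition G a b s := N_position DD (pos dd a b s).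

Lemma rank_lt (w : T) : (enum_rank w < K)%N.
Proof. exact: ltn_ord. Qed.

Lemma memL q : q \in L ->
  [\/ exists X w, delta w /\ q = (ea X, eb X, last, qt X w),
      exists X w j, q = qq X (w, j)
    | exists X j, q = (N%:Z - kk j - 2 * ea X, N%:Z + kk j - 2 * eb X, rt X j, last)].
Proof.
rewrite /L (mem_cat q LM) (mem_cat q LQ) => /orP [|/orP []]; rewrite /LM /LQ /LR.
- move/allpairsP => [[X w] [_ /=]]; rewrite mem_filter => /andP [Hw _] ->.
  by apply: Or31; exists X, w.
- move/allpairsP => [[X wj] [_ /= _ ->]]; apply: Or32; exists X, wj.1, wj.2; by case: wj.
- move/allpairsP => [[X j] [_ _ ->]]; apply: Or33; by exists X, j.
Qed.

Lemma validL q : q \in L -> validq dd q.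
Proof.
case/memL => [[X [w [_ ->]]]|[X [w [j ->]]]|[X [j ->]]].
- have := rank_lt w; rewrite /validq /qt /=; case: X => /= ?; split; lia.
- have := rank_lt w; have := ltn_ord j.
  rewrite /validq /qq /qt /rt /=; case: X; case: (w j) => /= ? ?; split; lia.
- have := ltn_ord j; rewrite /validq /rt /=; case: X => /= ?; split; lia.
Qed.

Lemma posL q : q \in L -> 0 < q.1.1.1 + q.1.1.2.
Proof.
case/memL => [[X [w [_ ->]]]|[X [w [j ->]]]|[X [j ->]]].
- by case: X.
- rewrite /qq /=; case: (w j); case: X; rewrite /ea /eb /=; lia.
- have := ltn_ord j; rewrite /kk; case: X; rewrite /ea /eb /=; lia.
Qed.


Lemma qt_inj X X' w w' : qt X w = qt X' w' -> X = X' /\ w = w'.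
Proof.
have := rank_lt w; have := rank_lt w'.
rewrite /qt; case: X; case: X' => /= H1 H2 E; try lia;
  (split => //; apply: enum_rank_inj; apply: val_inj => /=; lia).
Qed.

Lemma rt_inj X X' j j' : rt X j = rt X' j' -> X = X' /\ j = j'.
Proof.
have := ltn_ord j; have := ltn_ord j'.
rewrite /rt; case: X; case: X' => /= H1 H2 E; try lia;
  (split => //; apply: val_inj => /=; lia).
Qed.

Lemma Gc a b s : (2 <= s)%N -> 0 <= a -> 0 <= b ->
  (G a b s <-> exists q, [/\ q \in L, q.1.2 = s, 0 <= a - q.1.1.1, 0 <= b - q.1.1.2
              & ~ G (a - q.1.1.1) (b - q.1.1.2) q.2]).
Proof. exact: G_char validL posL. Qed.

Lemma inLM X w : delta w -> (ea X, eb X, last, qt X w) \in L.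
Proof.
move=> Hw; rewrite /L (mem_cat _ LM) /LM; apply/orP; left.
apply/allpairsP; exists (X, w); split => //; first by case: X.
by rewrite mem_filter Hw mem_enum.
Qed.

Lemma inLQ X w j : qq X (w, j) \in L.
Proof.
rewrite /L (mem_cat _ LM) (mem_cat _ LQ) /LQ; apply/orP; right; apply/orP; left.
apply/allpairsP; exists (X, (w, j)); split => //; first by case: X.
by apply/allpairsP; exists (w, j); rewrite !mem_enum.
Qed.

Lemma inLR X j : (N%:Z - kk j - 2 * ea X, N%:Z + kk j - 2 * eb X, rt X j, last) \in L.
Proof.
rewrite /L (mem_cat _ LM) (mem_cat _ LQ) /LR; apply/orP; right; apply/orP; right.
apply/allpairsP; exists (X, j); split => //; first by case: X.
by rewrite mem_enum.
Qed.

Lemma qt_bd X w : (2 <= qt X w < 2 + 2 * K)%N.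
Proof. have := rank_lt w; rewrite /qt; case: X => /= ?; lia. Qed.

Lemma rt_bd X j : (2 + 2 * K <= rt X j < last)%N.
Proof. have := ltn_ord j; rewrite /rt; case: X => /= ?; lia. Qed.

Lemma qq_src X w j : (qq X (w, j)).1.2 = qt X w.
Proof. by rewrite /qq; case: (w j). Qed.

Lemma GM a b : 0 <= a -> 0 <= b ->
  (G a b last <-> exists X w, [/\ delta w, 0 <= a - ea X, 0 <= b - eb X
                               & ~ G (a - ea X) (b - eb X) (qt X w)]).
Proof.
move=> Ha Hb; rewrite Gc //; last by lia.
split.
  case=> q [/memL Hq Hs H1 H2 Hn].
  case: Hq => [[X [w [Hw Eq]]]|[X [w [j Eq]]]|[X [j Eq]]]; subst q.
  - by exists X, w.
  - by move: Hs; rewrite qq_src; have := qt_bd X w; lia.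
  - by move: Hs => /=; have := rt_bd X j; lia.
case=> X [w [Hw H1 H2 Hn]]; exists (ea X, eb X, last, qt X w); split => //.
exact: inLM.
Qed.

Lemma GQ X w a b : 0 <= a -> 0 <= b ->
  (G a b (qt X w) <-> exists j, [/\ 0 <= a - (qq X (w, j)).1.1.1, 0 <= b - (qq X (w, j)).1.1.2
                               & ~ G (a - (qq X (w, j)).1.1.1) (b - (qq X (w, j)).1.1.2) (qq X (w, j)).2]).
Proof.
move=> Ha Hb; rewrite Gc //; try by have := qt_bd X w; lia.
split.
  case=> q [/memL Hq Hs H1 H2 Hn].
  case: Hq => [[X' [w' [Hw Eq]]]|[X' [w' [j Eq]]]|[X' [j Eq]]]; subst q.
  - by move: Hs => /=; have := qt_bd X w; lia.
  - move: Hs; rewrite qq_src => /qt_inj [E1 E2]; subst X' w'; by exists j.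
  - by move: Hs => /=; have := rt_bd X' j; have := qt_bd X w; lia.
case=> j [H1 H2 Hn]; exists (qq X (w, j)); split => //.
  exact: inLQ.
exact: qq_src.
Qed.

Lemma GR X j a b : 0 <= a -> 0 <= b ->
  (G a b (rt X j) <-> [/\ 0 <= a - (N%:Z - kk j - 2 * ea X), 0 <= b - (N%:Z + kk j - 2 * eb X)
                      & ~ G (a - (N%:Z - kk j - 2 * ea X)) (b - (N%:Z + kk j - 2 * eb X)) last]).
Proof.
move=> Ha Hb; rewrite Gc //; try by have := rt_bd X j; lia.
split.
  case=> q [/memL Hq Hs H1 H2 Hn].
  case: Hq => [[X' [w' [Hw Eq]]]|[X' [w' [j' Eq]]]|[X' [j' Eq]]]; subst q.
  - by move: Hs => /=; have := rt_bd X j; lia.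
  - by move: Hs; rewrite qq_src; have := rt_bd X j; have := qt_bd X' w'; lia.
  - move: Hs => /= /rt_inj [E1 E2]; subst X' j'; by split.
case=> H1 H2 Hn; exists (N%:Z - kk j - 2 * ea X, N%:Z + kk j - 2 * eb X, rt X j, last).
split => //; exact: inLR.
Qed.


Lemma eab X : [/\ 0 <= ea X, 0 <= eb X & ea X + eb X = 1].
Proof. by case: X. Qed.

Lemma ca_runS t u :
  ca_run delta t.+1 u = delta [ffun j : 'I_n => ca_run delta t (u - r%:Z + j%:Z)].
Proof. by []. Qed.

Lemma blank t u : (r * t)%:Z < `|u| -> ca_run delta t u.
Proof.
elim: t u => [|t IH] u Hu.
  rewrite /ca_run /= /init_config; apply/eqP => E; move: Hu; rewrite E; lia.
rewrite ca_runS.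
have -> : [ffun j : 'I_n => ca_run delta t (u - r%:Z + j%:Z)] = [ffun => true].
  apply/ffunP => j; rewrite !ffunE; apply: IH; have := ltn_ord j; move: Hu; rewrite mulnS; lia.
exact: Hblank.
Qed.

Lemma main t u : `|u| <= (N * t)%:Z ->
  (G ((N * t)%:Z + u) ((N * t)%:Z - u) last <-> ca_run delta t u).
Proof.
elim: t u => [|t IH] u Hu.
  have -> : u = 0 by move: Hu; rewrite muln0; lia.
  rewrite muln0 /ca_run /= /init_config eqxx; split => //.
  rewrite GM //; case=> X [w [_ H1 H2 _]]; have [E1 E2 E3] := eab X; lia.
rewrite ca_runS.
set cw := [ffun j : 'I_n => ca_run delta t (u - r%:Z + j%:Z)].
have Ht : (N * t.+1)%:Z = (N*t)%:Z + N%:Z by rewrite mulnS; lia.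
rewrite Ht in Hu *.
have HrN : (r * t <= N * t)%N by apply: leq_mul; lia.
have [a Ea] : exists a, a = (N*t)%:Z + N%:Z + u by eexists.
have [b Eb] : exists b, b = (N*t)%:Z + N%:Z - u by eexists.
rewrite -Ea -Eb.
have HN : forall (j : 'I_n) a' b', a' = (N*t)%:Z + (u + kk j) -> b' = (N*t)%:Z - (u + kk j) ->
   ((0 <= a' /\ 0 <= b' /\ ~ G a' b' last) <-> ~~ cw j).
  move=> j a' b' -> ->; rewrite ffunE.
  have -> : u - r%:Z + j%:Z = u + kk j by rewrite /kk; lia.
  case: (lerP `|u + kk j| (N*t)%:Z) => Hj.
    rewrite (IH _ Hj); split; first by case=> _ [_ H]; apply/negP.
    move=> /negP H; split; [lia | split; [lia | done]].
  have -> : ca_run delta t (u + kk j) by apply: blank; lia.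
  by split => // [[H1 [H2 _]]]; lia.
have HR : forall X j, 0 <= a - ea X - ea X -> 0 <= b - eb X - eb X ->
    (G (a - ea X - ea X) (b - eb X - eb X) (rt X j) <-> ~~ cw j).
  move=> X j H1 H2; have := eab X => -[E1 E2 E3].
  rewrite GR //.
  rewrite -(HN j (a - ea X - ea X - (N%:Z - kk j - 2 * ea X))
                 (b - eb X - eb X - (N%:Z + kk j - 2 * eb X))); try lia.
  by split => [[? ? ?]|[? [? ?]]].
have HQ : forall X w, 0 <= a - ea X - ea X -> 0 <= b - eb X - eb X ->
    (G (a - ea X) (b - eb X) (qt X w) <-> w != cw).
  move=> X w H1 H2; have := eab X => -[E1 E2 E3].
  rewrite GQ; try lia.
  split.
    case=> j [H3 H4 Hn]; apply/eqP => Ew; subst w; move: H3 H4 Hn; rewrite /qq /=.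
    case Hc: (cw j) => /= H3 H4 Hn.
      have := HN j (a - ea X - (N%:Z - kk j - ea X)) (b - eb X - (N%:Z + kk j - eb X)).
      move=> Hf; have [Hf1 _] := Hf ltac:(lia) ltac:(lia).
      by rewrite Hc in Hf1; move: (Hf1 (conj H3 (conj H4 Hn))).
    by apply: Hn; rewrite HR // Hc.
  move=> Hne.
  have [j Hj] : exists j, w j != cw j.
    apply: not_all_not_ex => Hall; move/eqP: Hne; apply; apply/ffunP => j.
    case: (w j =P cw j) => // Hneq; exfalso; apply: (Hall j); by apply/eqP.
  exists j; rewrite /qq /=; case Hw: (w j) in Hj *.
    have Hc : ~~ cw j by case: (cw j) Hj.
    have := HN j (a - ea X - (N%:Z - kk j - ea X)) (b - eb X - (N%:Z + kk j - eb X)).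
    move=> Hf; have [H3 [H4 H5]] := (proj2 (Hf ltac:(lia) ltac:(lia)) Hc).
    by split.
  have Hc : cw j by case: (cw j) Hj.
  split => //; rewrite HR //; by rewrite Hc.
rewrite GM; try lia.
case Hd: (delta cw).
  split => // _; case: (lerP 2 a) => Ha2.
    exists true, cw; rewrite /ea /eb; split => //; try lia.
    have := HQ true cw; rewrite /ea /eb => ->; try lia.
    by rewrite eqxx.
  exists false, cw; rewrite /ea /eb; split => //; try lia.
  have := HQ false cw; rewrite /ea /eb => ->; try lia.
  by rewrite eqxx.
split => //; case=> X [w [Hw H1 H2 Hn]].
have Hur : `|u| <= (r * t.+1)%:Z.
  case: (lerP `|u| (r * t.+1)%:Z) => // Hgt.
  by have := blank Hgt; rewrite ca_runS -/cw Hd.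
have := eab X => -[E1 E2 E3].
exfalso; apply: Hn; rewrite HQ; try (move: Hur; rewrite mulnS; lia).
by apply/eqP => E; rewrite E Hd in Hw.
Qed.

End CA.

Unset Implicit Arguments.

Theorem corollary1 (r : nat) (delta : {ffun 'I_(2 * r + 1) -> bool} -> bool) :
  blank_one delta ->
  exists (N : nat) (D : seq (vec (2 * N + 2))),
    (0 < N)%N /\ positive_sums D /\
    forall (t : nat) (u : int), `|u| <= (N * t)%:Z ->
      game_value_is D (ca_position N t u) (ca_run delta t u).
Proof.
move=> Hb.
exists (#|{ffun 'I_(2 * r + 1) -> bool}| + 2 * r + 2)%N, (DD delta).
split; first by rewrite addn2.
split; first exact: pos_sums (@validL r delta) (@posL r delta).
move=> t u Hu; rewrite /game_value_is.
exact: iff_sym (main Hb Hu).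
Qed.
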